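(* Let $(G,u)$ be a unital po-group satisfying RIP such that the pseudo effect algebra $E=\Gamma(G,u)$ satisfies RDP (respectively RDP$_1$). Let $m,n\ge1$ and suppose $a_1+\cdots+a_m=b_1+\cdots+b_n$ in $G$, where $a_1,\ldots,a_{m-1},b_1,\ldots,b_{n-1}\in E$ and $a_m,b_n\in G^+$. Then for $\{a_i\}$ and $\{b_j\}$ the $(m,n)$-RDP (respectively the $(m,n)$-RDP$_1$) holds in $G$, i.e. there are $c_{ij}\in G^+$ ($1\le i\le m$, $1\le j\le n$) with $a_i=\sum_{j=1}^n c_{ij}$ and $b_j=\sum_{i=1}^m c_{ij}$ for all $i,j$ (and, in the RDP$_1$ case, additionally $c_{i+1,j}+\cdots+c_{mj}\ \mathbf{com}\ c_{i,j+1}+\cdots+c_{in}$ for all $1\le i<m$, $1\le j<n$).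
   Context: A po-group is a (not necessarily Abelian, additively written) group with a partial order $\le$ such that $a\le b$ implies $x+a+y\le x+b+y$; $G^+$ is its positive cone. A unital po-group $(G,u)$ is a po-group with a strong unit $u\in G^+$ (for each $g\in G$ there is $k\ge1$ with $g\le ku$). $\Gamma(G,u)=\{g\in G:0\le g\le u\}$ is a pseudo effect algebra with constants $0,u$ and partial addition: $a+b$ is defined (equal to the group sum) iff $a+b\le u$. RIP: whenever $a_i\le b_j$ for all $i,j\in\{1,2\}$, there is $c$ with $a_i\le c\le b_j$ for all $i,j$. For $a,b\in G^+$, $a\ \mathbf{com}\ b$ means $x+y=y+x$ for all $0\le x\le a$, $0\le y\le b$. RDP for a pseudo effect algebra $E$: whenever $a_1+a_2=b_1+b_2$ in $E$, there are $c_{11},c_{12},c_{21},c_{22}\in E$ with $a_1=c_{11}+c_{12}$, $a_2=c_{21}+c_{22}$, $b_1=c_{11}+c_{21}$, $b_2=c_{12}+c_{22}$ (all sums defined); RDP$_1$ additionally requires that $x\le c_{12}$, $y\le c_{21}$ in $E$ imply $x+y=y+x$. *)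

(* Defs.v *)
From mathcomp Require Import all_boot.
Set Implicit Arguments. Unset Strict Implicit. Unset Printing Implicit Defensive.

(* A (not necessarily Abelian, additively written) po-group on a carrier T,
   given by explicit operations add, opp, zero and a partial order le. *)
Record is_pogroup (T : Type) (add : T -> T -> T) (opp : T -> T) (zero : T)
    (le : T -> T -> Prop) : Prop := {
  pg_addA : forall x y z, add x (add y z) = add (add x y) z;
  pg_add0l : forall x, add zero x = x;
  pg_addr0 : forall x, add x zero = x;
  pg_addNl : forall x, add (opp x) x = zero;
  pg_addrN : forall x, add x (opp x) = zero;
  pg_le_refl : forall x, le x x;
  pg_le_anti : forall x y, le x y -> le y x -> x = y;
  pg_le_trans : forall x y z, le x y -> le y z -> le x z;
  pg_le_compat : forall a b x y, le a b -> le (add (add x a) y) (add (add x b) y)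
}.

Section PoGroup.
Variables (T : Type) (add : T -> T -> T) (zero : T) (le : T -> T -> Prop).

Fixpoint nmul (k : nat) (u : T) : T :=
  match k with O => zero | S k' => add u (nmul k' u) end.

Definition strong_unit (u : T) : Prop :=
  le zero u /\ forall g, exists k, (1 <= k)%N /\ le g (nmul k u).

Definition RIP : Prop :=
  forall a1 a2 b1 b2, le a1 b1 -> le a1 b2 -> le a2 b1 -> le a2 b2 ->
    exists c, le a1 c /\ le a2 c /\ le c b1 /\ le c b2.

Definition inGamma (u x : T) : Prop := le zero x /\ le x u.

Definition com (a b : T) : Prop :=
  forall x y, le zero x -> le x a -> le zero y -> le y b -> add x y = add y x.

(* RDP for E = Gamma(G,u): a1+a2 = b1+b2 in E (i.e. all in E, sums defined) *)
Definition RDP_Gamma (u : T) : Prop :=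
  forall a1 a2 b1 b2, inGamma u a1 -> inGamma u a2 -> inGamma u b1 -> inGamma u b2 ->
    le (add a1 a2) u -> add a1 a2 = add b1 b2 ->
    exists c11 c12 c21 c22,
      inGamma u c11 /\ inGamma u c12 /\ inGamma u c21 /\ inGamma u c22 /\
      a1 = add c11 c12 /\ a2 = add c21 c22 /\ b1 = add c11 c21 /\ b2 = add c12 c22.

(* RDP_1 for E = Gamma(G,u) (order of E = order of G restricted to [0,u]) *)
Definition RDP1_Gamma (u : T) : Prop :=
  forall a1 a2 b1 b2, inGamma u a1 -> inGamma u a2 -> inGamma u b1 -> inGamma u b2 ->
    le (add a1 a2) u -> add a1 a2 = add b1 b2 ->
    exists c11 c12 c21 c22,
      inGamma u c11 /\ inGamma u c12 /\ inGamma u c21 /\ inGamma u c22 /\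
      a1 = add c11 c12 /\ a2 = add c21 c22 /\ b1 = add c11 c21 /\ b2 = add c12 c22 /\
      (forall x y, inGamma u x -> inGamma u y -> le x c12 -> le y c21 ->
         add x y = add y x).

Definition gsum (s : seq T) : T := foldr add zero s.

(* (m,n)-RDP for a_0..a_{m-1}, b_0..b_{n-1} (0-indexed) *)
Definition mnRDP (m n : nat) (a b : nat -> T) (c : nat -> nat -> T) : Prop :=
  (forall i j, (i < m)%N -> (j < n)%N -> le zero (c i j)) /\
  (forall i, (i < m)%N -> a i = gsum [seq c i j | j <- iota 0 n]) /\
  (forall j, (j < n)%N -> b j = gsum [seq c i j | i <- iota 0 m]).

(* the additional commutation condition of (m,n)-RDP_1:
   c_{i+1,j}+...+c_{m,j} com c_{i,j+1}+...+c_{i,n}, 1<=i<m, 1<=j<n (1-indexed) *)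
Definition mnRDP1_com (m n : nat) (c : nat -> nat -> T) : Prop :=
  forall i j, (i < m.-1)%N -> (j < n.-1)%N ->
    com (gsum [seq c k j | k <- iota i.+1 (m - i.+1)])
        (gsum [seq c i l | l <- iota j.+1 (n - j.+1)]).

End PoGroup.

(* Main.v *)
Require Import Defs.
From mathcomp Require Import all_boot.
Set Implicit Arguments. Unset Strict Implicit.
Set Warnings "-notation-overridden".

Section Proof3p5.
Variables (T : Type) (add : T -> T -> T) (opp : T -> T) (zero : T)
  (le : T -> T -> Prop) (u : T).
Hypothesis Hpog : is_pogroup add opp zero le.
Hypothesis Hrip : RIP le.
Variable Q : T -> T -> Prop.

Definition RDPQ : Prop :=
  forall a1 a2 b1 b2, inGamma zero le u a1 -> inGamma zero le u a2 ->
    inGamma zero le u b1 -> inGamma zero le u b2 ->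
    le (add a1 a2) u -> add a1 a2 = add b1 b2 ->
    exists c11 c12 c21 c22,
      inGamma zero le u c11 /\ inGamma zero le u c12 /\ inGamma zero le u c21 /\
      inGamma zero le u c22 /\
      a1 = add c11 c12 /\ a2 = add c21 c22 /\ b1 = add c11 c21 /\ b2 = add c12 c22 /\
      Q c21 c12.

Hypothesis HQ : RDPQ.

Let addA := pg_addA Hpog.
Let add0l := pg_add0l Hpog.
Let addr0 := pg_addr0 Hpog.
Let addNl := pg_addNl Hpog.
Let addrN := pg_addrN Hpog.
Let le_trans := pg_le_trans Hpog.

Lemma le_addl x a b : le a b -> le (add x a) (add x b).
Proof. move=> H; have := pg_le_compat Hpog x zero H; by rewrite !addr0. Qed.

Lemma le_addr y a b : le a b -> le (add a y) (add b y).
Proof. move=> H; have := pg_le_compat Hpog zero y H; by rewrite !add0l. Qed.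

Lemma le_addnn x y : le zero y -> le x (add x y).
Proof. move=> H; have := le_addl x H; by rewrite addr0. Qed.

Lemma le_nnadd x y : le zero x -> le y (add x y).
Proof. move=> H; have := le_addr y H; by rewrite add0l. Qed.

Lemma le0_add x y : le zero x -> le zero y -> le zero (add x y).
Proof. move=> Hx Hy; apply: le_trans Hx _; exact: le_addnn. Qed.

Lemma cancelL x y s : add x y = s -> y = add (opp x) s.
Proof. move=> <-; by rewrite addA addNl add0l. Qed.

Lemma star x y b0 B : inGamma zero le u x -> inGamma zero le u b0 ->
  le zero y -> le zero B -> add x y = add b0 B ->
  exists c11 c12 c21 c22, le zero c11 /\ inGamma zero le u c12 /\
    le zero c21 /\ le zero c22 /\
    x = add c11 c12 /\ y = add c21 c22 /\ b0 = add c11 c21 /\ B = add c12 c22 /\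
    Q c21 c12.
Proof.
move=> [Hx0 Hxu] [Hb0 Hbu] Hy HB Hs.
set s := add x y.
have Hxs : le x s by exact: le_addnn.
have Hbs : le b0 s by rewrite /s Hs; exact: le_addnn.
have [t [Hxt [Hbt [Hts Htu]]]] := Hrip Hxs Hxu Hbs Hbu.
set p := add (opp x) t.
set q := add (opp b0) t.
set r := add (opp t) s.
have Htp : add x p = t by rewrite /p addA addrN add0l.
have Htq : add b0 q = t by rewrite /q addA addrN add0l.
have Htr : add t r = s by rewrite /r addA addrN add0l.
have ge0_sub z w : le z w -> le zero (add (opp z) w).
  by move=> H; have := le_addl (opp z) H; rewrite addNl.
have le_sub z w : le zero z -> le (add (opp z) w) w.
  move=> H; have := le_addl (opp z) H; rewrite addNl addr0 => H'.
  by have := le_addr w H'; rewrite add0l.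
have Hp0 : le zero p by exact: ge0_sub.
have Hq0 : le zero q by exact: ge0_sub.
have Hr0 : le zero r by exact: ge0_sub.
have Hpu : le p u by apply: le_trans (le_sub _ _ Hx0) Htu.
have Hqu : le q u by apply: le_trans (le_sub _ _ Hb0) Htu.
have Htu' : le (add x p) u by rewrite Htp.
have Heq : add x p = add b0 q by rewrite Htp Htq.
have [c11 [c12 [c21 [c22 [[H11 _] [H12 [[H21 _] [[H22 _]
     [E1 [E2 [E3 [E4 HQ']]]]]]]]]]]] :=
  HQ (conj Hx0 Hxu) (conj Hp0 Hpu) (conj Hb0 Hbu) (conj Hq0 Hqu) Htu' Heq.
exists c11, c12, c21, (add c22 r).
do 9?split => //.
- exact: le0_add.
- have -> : y = add (opp x) s by apply: cancelL.
  by rewrite -Htr addA -/p E2 addA.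
- have -> : B = add (opp b0) s by apply: cancelL; rewrite -Hs.
  by rewrite -Htr addA -/q E4 addA.
Qed.

Definition S (f : nat -> T) n := gsum add zero [seq f i | i <- iota 0 n].

Lemma map_shift (f : nat -> T) i l :
  [seq f k | k <- iota i.+1 l] = [seq f k.+1 | k <- iota i l].
Proof. by elim: l i => //= l IH i; rewrite IH. Qed.

Lemma S_S f n : S f n.+1 = add (f 0) (S (fun i => f i.+1) n).
Proof. by rewrite /S /= map_shift. Qed.

Lemma S_1 f : S f 1 = f 0.
Proof. by rewrite /S /gsum /= addr0. Qed.

Lemma S_ge0 f n : (forall i, (i < n)%N -> le zero (f i)) -> le zero (S f n).
Proof.
elim: n f => [|n IH] f H; first by rewrite /S /=; exact: pg_le_refl Hpog _.
rewrite S_S; apply: le0_add; first exact: H.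
by apply: IH => i Hi; apply: H.
Qed.


Lemma two_n n : (0 < n)%N -> forall x y (b : nat -> T),
  inGamma zero le u x -> le zero y ->
  (forall j, (j < n.-1)%N -> inGamma zero le u (b j)) -> le zero (b n.-1) ->
  add x y = S b n ->
  exists c1 c2 : nat -> T,
   (forall j, (j < n)%N -> le zero (c1 j) /\ le zero (c2 j)) /\
   x = S c1 n /\ y = S c2 n /\ (forall j, (j < n)%N -> b j = add (c1 j) (c2 j)) /\
   (forall j, (j < n.-1)%N ->
      Q (c2 j) (gsum add zero [seq c1 l | l <- iota j.+1 (n - j.+1)])).
Proof.
case: n => // n _; elim: n => [|n IH] x y b Hx Hy Hb Hbn Hs.
  exists (fun _ => x), (fun _ => y); rewrite !S_1; do 4?split => //.
  - by case: Hx.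
  - by case => // _; rewrite Hs S_1.
rewrite S_S in Hs.
have HB : le zero (S (fun i => b i.+1) n.+1).
  apply: S_ge0 => i Hi; case: (ltnP i n) => Hin.
    by case: (Hb i.+1 Hin).
  by have -> : i = n by apply/eqP; rewrite eqn_leq Hin -ltnS Hi.
have [c11 [c12 [c21 [c22 [H11 [H12 [H21 [H22 [E1 [E2 [E3 [E4 HQ']]]]]]]]]]]] :=
  star Hx (Hb 0 erefl) Hy HB Hs.
have [d1 [d2 [Hd0 [F1 [F2 [F3 F4]]]]]] :=
  IH c12 c22 (fun j => b j.+1) H12 H22 (fun j Hj => Hb j.+1 Hj) Hbn (esym E4).
exists (fun j => if j is k.+1 then d1 k else c11),
       (fun j => if j is k.+1 then d2 k else c21).
split; [|split; [|split; [|split]]].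
- by case => [|j] Hj //; apply: Hd0.
- by rewrite S_S E1 F1.
- by rewrite S_S E2 F2.
- by case => [|j] Hj //; apply: F3.
- case => [|j] Hj.
    by rewrite map_shift; rewrite F1 in HQ'.
  rewrite map_shift; exact: F4.
Qed.

Lemma m_n m : (0 < m)%N -> forall n (a b : nat -> T), (0 < n)%N ->
  S a m = S b n ->
  (forall i, (i < m.-1)%N -> inGamma zero le u (a i)) ->
  (forall j, (j < n.-1)%N -> inGamma zero le u (b j)) ->
  le zero (a m.-1) -> le zero (b n.-1) ->
  exists c : nat -> nat -> T, mnRDP add zero le m n a b c /\
    (forall i j, (i < m.-1)%N -> (j < n.-1)%N ->
      Q (gsum add zero [seq c k j | k <- iota i.+1 (m - i.+1)])
        (gsum add zero [seq c i l | l <- iota j.+1 (n - j.+1)])).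
Proof.
case: m => // m _; elim: m => [|m IH] n a b Hn Hs Ha Hb Ham Hbn.
  exists (fun _ j => b j); split; last by [].
  split; [|split].
  - move=> i j _ Hj; case: (ltnP j n.-1) => Hjn; first by case: (Hb j Hjn).
    have -> : j = n.-1 by apply/eqP; rewrite eqn_leq Hjn andbT -ltnS prednK.
    done.
  - by case => // _; rewrite -S_1.
  - by move=> j _; rewrite /= /gsum /= addr0.
rewrite S_S in Hs.
have HA : le zero (S (fun i => a i.+1) m.+1).
  apply: S_ge0 => i Hi; case: (ltnP i m) => Him.
    by case: (Ha i.+1 Him).
  by have -> : i = m by apply/eqP; rewrite eqn_leq Him -ltnS Hi.
have [c1 [c2 [Hc0 [F1 [F2 [F3 F4]]]]]] := two_n Hn (Ha 0 erefl) HA Hb Hbn Hs.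
have Hc2 : forall j, (j < n.-1)%N -> inGamma zero le u (c2 j).
  move=> j Hj; have Hjn : (j < n)%N by apply: leq_trans Hj (leq_pred n).
  have [Hb0 Hbu] := Hb j Hj; have [H1 H2] := Hc0 j Hjn.
  split => //; apply: le_trans Hbu; rewrite F3 //; exact: le_nnadd.
have Hc2n : le zero (c2 n.-1).
  have Hnn : (n.-1 < n)%N by rewrite prednK.
  by case: (Hc0 n.-1 Hnn).
have [e [[He0 [G1 G2]] G3]] :=
  IH n (fun i => a i.+1) c2 Hn F2 (fun i Hi => Ha i.+1 Hi) Hc2 Ham Hc2n.
exists (fun i j => if i is k.+1 then e k j else c1 j); split; [split; [|split]|].
- case => [|i] j Hi Hj; last exact: He0.
  by case: (Hc0 j Hj).
- case => [|i] Hi; first exact: F1.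
  exact: G1.
- move=> j Hj; rewrite /= map_shift.
  have := G2 j Hj; rewrite /gsum /= => <-; exact: F3.
- case => [|i] j Hi Hj.
    rewrite map_shift.
    have := F4 j Hj; rewrite (G2 j (leq_trans Hj (leq_pred n))).
    by [].
  rewrite /= map_shift; exact: G3.
Qed.

End Proof3p5.

Theorem proposition3p5 (T : Type) (add : T -> T -> T) (opp : T -> T) (zero : T)
  (le : T -> T -> Prop) (u : T)
  (Hpog : is_pogroup add opp zero le)
  (Hunit : strong_unit add zero le u)
  (Hrip : RIP le)
  (m n : nat) (Hm : (1 <= m)%N) (Hn : (1 <= n)%N) (a b : nat -> T)
  (Hsum : gsum add zero [seq a i | i <- iota 0 m] = gsum add zero [seq b j | j <- iota 0 n])
  (Ha : forall i, (i < m.-1)%N -> inGamma zero le u (a i))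
  (Hb : forall j, (j < n.-1)%N -> inGamma zero le u (b j))
  (Ham : le zero (a m.-1)) (Hbn : le zero (b n.-1)) :
  (RDP_Gamma add zero le u ->
     exists c : nat -> nat -> T, mnRDP add zero le m n a b c) /\
  (RDP1_Gamma add zero le u ->
     exists c : nat -> nat -> T, mnRDP add zero le m n a b c /\ mnRDP1_com add zero le m n c).
Proof.
split => H.
  have HQ : RDPQ add zero le u (fun _ _ => True).
    move=> a1 a2 b1 b2 H1 H2 H3 H4 H5 H6.
    have [c11 [c12 [c21 [c22 [G1 [G2 [G3 [G4 [E1 [E2 [E3 E4]]]]]]]]]]] :=
      H a1 a2 b1 b2 H1 H2 H3 H4 H5 H6.
    by exists c11, c12, c21, c22.
  have [c [Hc _]] := m_n Hpog Hrip HQ Hm Hn Hsum Ha Hb Ham Hbn.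
  by exists c.
have HQ : RDPQ add zero le u (com add zero le).
  move=> a1 a2 b1 b2 H1 H2 H3 H4 H5 H6.
  have [c11 [c12 [c21 [c22 [G1 [G2 [G3 [G4 [E1 [E2 [E3 [E4 P]]]]]]]]]]]] :=
    H a1 a2 b1 b2 H1 H2 H3 H4 H5 H6.
  exists c11, c12, c21, c22; do 8!(split => //).
  move=> x y Hx0 Hx Hy0 Hy.
  have Gx : inGamma zero le u x by split => //; apply: pg_le_trans Hpog _ _ _ Hx _; case: G3.
  have Gy : inGamma zero le u y by split => //; apply: pg_le_trans Hpog _ _ _ Hy _; case: G2.
  by rewrite (P y x Gy Gx Hy Hx).
have [c [Hc Hc']] := m_n Hpog Hrip HQ Hm Hn Hsum Ha Hb Ham Hbn.
by exists c.
Qed.
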